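(* Let $R$ be a commutative ring with identity and $S$ a multiplicatively closed subset of $R$. Let $L=Id(R)$ be the multiplicative lattice of all ideals of $R$, and $S_L=\{(a)\in L\mid a\in S\}$. Then an ideal $Q$ of $R$ is an $S$-primary ideal of $R$ if and only if $Q$, viewed as an element of $L$, is an $S_L$-primary element of $L$.
   Context: A proper ideal $Q$ of $R$ is $S$-primary if $S\cap Q=\varnothing$ and there exists $s\in S$ such that for all $a,b\in R$, $ab\in Q$ implies $sa\in Q$ or $sb\in\sqrt Q$ (the usual radical). In a multiplicative lattice $L$ with set $L_*$ of compact elements, the radical is $\sqrt a=\bigvee\{x\in L_*\mid x^n\le a\text{ for some }n\in\mathbb{Z}^+\}$; for a subset $T$ of compact elements, a proper element $q$ with $t\not\le q$ for all $t\in T$ is $T$-primary if there exists $t\in T$ such that for all $c,d\in L$, $cd\le q$ implies $tc\le q$ or $td\le\sqrt q$. In $Id(R)$ the order is inclusion and the multiplication is the product of ideals. *)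

(* Defs.v *)
(* Ideals of a commutative ring R are represented as
   predicates R -> Prop satisfying [is_ideal]; the multiplicative lattice
   L = Id(R) is the collection of such predicates, ordered by inclusion,
   with multiplication the ideal product. *)
From mathcomp Require Import all_boot all_algebra.
Set Implicit Arguments. Unset Strict Implicit. Unset Printing Implicit Defensive.
Import GRing.Theory.
Local Open Scope ring_scope.

Section IdealLattice.
Variable R : comPzRingType.

Definition subI (A B : R -> Prop) : Prop := forall x, A x -> B x.

Definition is_ideal (I : R -> Prop) : Prop :=
  [/\ I 0, (forall x y, I x -> I y -> I (x + y)) & (forall r x, I x -> I (r * x))].

Definition genI (A : R -> Prop) : R -> Prop :=
  fun x => forall J, is_ideal J -> subI A J -> J x.

Definition topI : R -> Prop := fun _ => True.

Definition prodI (I J : R -> Prop) : R -> Prop :=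
  genI (fun x => exists a b, [/\ I a, J b & x = a * b]).

Definition joinI (X : (R -> Prop) -> Prop) : R -> Prop :=
  genI (fun x => exists I, X I /\ I x).

Definition principal (a : R) : R -> Prop := genI (fun x => x = a).

Fixpoint powI (I : R -> Prop) (n : nat) : R -> Prop :=
  match n with 0%N => topI | n'.+1 => prodI I (powI I n') end.

(* propositional list membership (no decidable equality on predicates) *)
Fixpoint inS (I : R -> Prop) (s : seq (R -> Prop)) : Prop :=
  match s with [::] => False | J :: s' => J = I \/ inS I s' end.

Definition compactI (c : R -> Prop) : Prop :=
  is_ideal c /\
  forall X : (R -> Prop) -> Prop, (forall I, X I -> is_ideal I) ->
    subI c (joinI X) ->
    exists s : seq (R -> Prop), (forall I, inS I s -> X I) /\
      subI c (joinI (fun I => inS I s)).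

Definition lat_rad (a : R -> Prop) : R -> Prop :=
  joinI (fun x => compactI x /\ exists n, (0 < n)%N /\ subI (powI x n) a).

Definition lat_T_primary (T : (R -> Prop) -> Prop) (q : R -> Prop) : Prop :=
  [/\ is_ideal q, ~ (forall x, q x),
      (forall t, T t -> ~ subI t q) &
      exists t, T t /\
        forall c d, is_ideal c -> is_ideal d -> subI (prodI c d) q ->
          subI (prodI t c) q \/ subI (prodI t d) (lat_rad q)].

Definition mult_closed (S : R -> Prop) : Prop :=
  S 1 /\ forall a b, S a -> S b -> S (a * b).

Definition rad (Q : R -> Prop) : R -> Prop :=
  fun x => exists n, (0 < n)%N /\ Q (x ^+ n).

Definition S_primary (S Q : R -> Prop) : Prop :=
  [/\ is_ideal Q, ~ (forall x, Q x),
      (forall s, S s -> ~ Q s) &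
      exists s, S s /\ forall a b, Q (a * b) -> Q (s * a) \/ rad Q (s * b)].

Definition S_L (S : R -> Prop) : (R -> Prop) -> Prop :=
  fun t => exists a, S a /\ t = principal a.

End IdealLattice.

(* Main.v *)
Require Import Defs.
From mathcomp Require Import all_boot all_algebra.
From Stdlib Require Import Classical.
From mathcomp Require Import zify ring.
Set Implicit Arguments. Unset Strict Implicit. Unset Printing Implicit Defensive.
Import GRing.Theory.
Local Open Scope ring_scope.

Lemma genI_ideal (R : comPzRingType) (A : R -> Prop) : is_ideal (genI A).
Proof.
split.
- by move=> J [J0 _ _] _.
- by move=> x y Hx Hy J HJ HA; case: (HJ) => _ HD _; apply: HD; [apply: Hx|apply: Hy].
- by move=> r x Hx J HJ HA; case: (HJ) => _ _ HM; apply: HM; apply: Hx.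
Qed.

Lemma genI0 (R : comPzRingType) (A : R -> Prop) : genI A 0.
Proof. by case: (genI_ideal A). Qed.
Lemma genID (R : comPzRingType) (A : R -> Prop) x y : genI A x -> genI A y -> genI A (x + y).
Proof. by case: (genI_ideal A) => _ H _; apply: H. Qed.
Lemma genIM (R : comPzRingType) (A : R -> Prop) r x : genI A x -> genI A (r * x).
Proof. by case: (genI_ideal A) => _ _ H; apply: H. Qed.

Lemma genI_min (R : comPzRingType) (A J : R -> Prop) :
  is_ideal J -> subI A J -> subI (genI A) J.
Proof. by move=> HJ HA x Hx; apply: Hx. Qed.

Lemma genI_gen (R : comPzRingType) (A : R -> Prop) : subI A (genI A).
Proof. by move=> x Ax J _ HA; apply: HA. Qed.

Lemma genI_mono (R : comPzRingType) (A B : R -> Prop) :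
  subI A B -> subI (genI A) (genI B).
Proof.
move=> AB; apply: genI_min; first exact: genI_ideal.
by move=> x /AB; apply: genI_gen.
Qed.

Lemma idealMr (R : comPzRingType) (Q : R -> Prop) x r :
  is_ideal Q -> Q x -> Q (x * r).
Proof. by case=> _ _ HM Hx; rewrite mulrC; apply: HM. Qed.

Lemma principalP (R : comPzRingType) (a y : R) :
  principal a y <-> exists r, y = r * a.
Proof.
split.
- move=> H; apply: (H (fun y => exists r, y = r * a)).
  + split; first by exists 0; rewrite mul0r.
    * by move=> x z [r1 ->] [r2 ->]; exists (r1 + r2); rewrite mulrDl.
    * by move=> r x [r1 ->]; exists (r * r1); rewrite mulrA.
  + by move=> x ->; exists 1; rewrite mul1r.
- move=> [r ->] J [J0 JD JM] HA; apply: JM; exact: HA.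
Qed.

Lemma principal_ideal (R : comPzRingType) (a : R) : is_ideal (principal a).
Proof. exact: genI_ideal. Qed.

Lemma principal_in (R : comPzRingType) (a : R) : principal a a.
Proof. by apply/principalP; exists 1; rewrite mul1r. Qed.

Lemma principal_sub (R : comPzRingType) (a : R) (Q : R -> Prop) :
  is_ideal Q -> Q a -> subI (principal a) Q.
Proof. by move=> [_ _ HM] Qa y /principalP [r ->]; apply: HM. Qed.

Lemma prodI_gen (R : comPzRingType) (I J : R -> Prop) a b :
  I a -> J b -> prodI I J (a * b).
Proof. by move=> Ia Jb; apply: genI_gen; exists a, b. Qed.

Lemma prodI_sub (R : comPzRingType) (I J Q : R -> Prop) :
  is_ideal Q -> (forall a b, I a -> J b -> Q (a * b)) -> subI (prodI I J) Q.
Proof.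
move=> HQ H; apply: genI_min => // x [a [b [Ia Jb ->]]]; exact: H.
Qed.

Lemma ideal_sum (R : comPzRingType) (Q : R -> Prop) (n : nat) (F : 'I_n -> R) :
  is_ideal Q -> (forall i, Q (F i)) -> Q (\sum_(i < n) F i).
Proof.
move=> [Q0 QD _] HF; by apply: (@bigop.big_ind R Q).

Qed.

Lemma ideal_muln (R : comPzRingType) (Q : R -> Prop) x n :
  is_ideal Q -> Q x -> Q (x *+ n).
Proof. by move=> [_ _ HM] Hx; rewrite -mulr_natl; apply: HM. Qed.

Lemma rad_ideal (R : comPzRingType) (Q : R -> Prop) :
  is_ideal Q -> is_ideal (Defs.rad Q).
Proof.
move=> HQ; have [Q0 QD QM] := HQ; split.
- by exists 1%N; rewrite expr1.
- move=> x y [m [m0 Hm]] [k [k0 Hk]]; exists (m + k)%N; split.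
    by rewrite addn_gt0 m0.
  rewrite exprDn; apply: ideal_sum => // i; apply: ideal_muln => //.
  have [ki|ik] := leqP k i.
  + rewrite [y ^+ i](_ : _ = y ^+ (i - k) * y ^+ k); last by rewrite -exprD subnK.
    rewrite mulrA; exact: QM.
  + rewrite [x ^+ _](_ : _ = x ^+ (m + k - i - m) * x ^+ m); last first.
      by rewrite -exprD subnK //; lia.
    by rewrite mulrAC; exact: QM.
- move=> r x [n [n0 Hn]]; exists n; split => //; rewrite exprMn; exact: QM.
Qed.

Lemma powI_in (R : comPzRingType) (c : R -> Prop) x n :
  c x -> powI c n (x ^+ n).
Proof.
move=> cx; elim: n => [|n IH] //=.
by rewrite exprS; apply: prodI_gen.
Qed.

Lemma powI_principal (R : comPzRingType) (x : R) n :
  subI (powI (principal x) n) (principal (x ^+ n)).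
Proof.
elim: n => [|n IH] /=.
- by move=> y _; apply/principalP; exists y; rewrite expr0 mulr1.
- apply: prodI_sub; first exact: principal_ideal.
  move=> a b /principalP [r ->] /IH /principalP [r' ->].
  by apply/principalP; exists (r * r'); rewrite exprS; ring.
Qed.

Lemma inS_catl (R : comPzRingType) (I : R -> Prop) s1 s2 :
  inS I s1 -> inS I (s1 ++ s2).
Proof. elim: s1 => //= J s IH [->|H]; [by left | by right; apply: IH]. Qed.

Lemma inS_catr (R : comPzRingType) (I : R -> Prop) s1 s2 :
  inS I s2 -> inS I (s1 ++ s2).
Proof. elim: s1 => //= J s IH H; right; exact: IH. Qed.

Lemma inS_cat (R : comPzRingType) (I : R -> Prop) s1 s2 :
  inS I (s1 ++ s2) -> inS I s1 \/ inS I s2.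
Proof.
elim: s1 => /= [|J s IH]; first by right.
by case=> [->|/IH [H|H]]; [left; left | left; right | right].
Qed.

Lemma principal_compact (R : comPzRingType) (x : R) : compactI (principal x).
Proof.
split; first exact: principal_ideal.
move=> X HX Hsub.
pose J := fun y => exists s : seq (R -> Prop),
  (forall I, inS I s -> X I) /\ joinI (fun I => inS I s) y.
have HJ : is_ideal J.
  split.
  - exists [::]; split => //; exact: genI0.
  - move=> a b [s1 [H1 a1]] [s2 [H2 b2]]; exists (s1 ++ s2); split.
      by move=> I /inS_cat [/H1|/H2].
    apply: genID.
    + apply: (genI_mono _ a1) => y [I [HI Iy]]; exists I; split => //; exact: inS_catl.
    + apply: (genI_mono _ b2) => y [I [HI Iy]]; exists I; split => //; exact: inS_catr.
  - move=> r a [s [H1 a1]]; exists s; split => //; exact: genIM.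
have Jx : J x.
  move: (Hsub _ (@principal_in _ x)); rewrite /joinI; apply: (genI_min HJ).
  rewrite /subI.
  move=> y [I [XI Iy]]; exists [:: I]; split.
    by move=> I' /= [<-|].
  by apply: genI_gen; exists I; split => //; left.
case: Jx => s [Hs Js]; exists s; split => //.
apply: principal_sub => //; exact: genI_ideal.
Qed.

Lemma lat_rad_rad (R : comPzRingType) (Q : R -> Prop) :
  is_ideal Q -> subI (lat_rad Q) (Defs.rad Q).
Proof.
move=> HQ; apply: genI_min; first exact: rad_ideal.
move=> y [I [[_ [n [n0 Hn]]] Iy]]; exists n; split => //.
by apply: Hn; apply: powI_in.
Qed.

Lemma rad_lat_rad (R : comPzRingType) (Q : R -> Prop) :
  is_ideal Q -> subI (Defs.rad Q) (lat_rad Q).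
Proof.
move=> HQ y [n [n0 Hn]]; apply: genI_gen; exists (principal y); split.
  split; first exact: principal_compact.
  exists n; split => // z /powI_principal; exact: principal_sub.
exact: principal_in.
Qed.

Theorem mainTheorem5 (R : comPzRingType) (S : R -> Prop) (hS : mult_closed S)
    (Q : R -> Prop) (hQ : is_ideal Q) :
  S_primary S Q <-> lat_T_primary (S_L S) Q.
Proof.
have [Q0 QD QM] := hQ.
split.
- case=> _ Hne HS [s [Ss Hs]]; split => //.
  + move=> t [a [Sa ->]] Hsub; apply: (HS a Sa); apply: Hsub; exact: principal_in.
  + exists (principal s); split; first by exists s.
    move=> c d Hc Hd Hcd.
    case: (classic (forall a, c a -> Q (s * a))) => [Hall|Hn].
      left; apply: prodI_sub => // u a /principalP [r ->] ca.
      by rewrite -mulrA; apply: QM; apply: Hall.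
    right; apply: prodI_sub; first exact: genI_ideal.
    have [a Ha] := not_all_ex_not _ _ Hn.
    have [ca nQ] := imply_to_and _ _ Ha.
    move=> u b /principalP [r ->] db.
    have := Hs a b (Hcd _ (prodI_gen ca db)); case=> // Hr.
    rewrite -mulrA; apply: genIM; exact: rad_lat_rad.
- case=> _ Hne HT [t [[s [Ss ->]] Ht]]; split => //.
  + move=> a Sa Qa; apply: (HT (principal a)); first by exists a.
    exact: principal_sub.
  + exists s; split => // a b Qab.
    have Hcd : subI (prodI (principal a) (principal b)) Q.
      apply: prodI_sub => // u v /principalP [r ->] /principalP [r' ->].
      have -> : r * a * (r' * b) = (r * r') * (a * b) by ring.
      exact: QM.
    case: (Ht _ _ (principal_ideal a) (principal_ideal b) Hcd) => H.
    + left; apply: H; apply: prodI_gen; exact: principal_in.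
    + right; apply: lat_rad_rad => //; apply: H; apply: prodI_gen; exact: principal_in.
Qed.
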